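(* Let $J\subseteq\mathbb R$ be an open interval, $A:J\to\mathbb R$ of class $C^3$, and $x_0\in J$ with $A''(x_0)\neq0$; let $\kappa_0=A''(x_0)/s(x_0)^3$. If $\tilde\epsilon>0$ is sufficiently small, then there is $\tilde\delta>0$ with $\tilde I=(x_0-\tilde\delta,x_0+\tilde\delta)\subset J$ (namely the $\delta$ furnished by the following local statement applied with $\epsilon=\tilde\epsilon$: for every three-tuple $\mathbf z$ of distinct points of $\Gamma(\tilde I)=\{x+iA(x):x\in\tilde I\}$ one has $|c^2(\mathbf z)-\kappa_0^2|<\tilde\epsilon$, $|\mathtt S[\mathrm{Re}K_\Gamma](\mathbf z)-\frac32c^2(\mathbf z)|<\tilde\epsilon$ and $|\mathtt S[\mathrm{Im}K_\Gamma](\mathbf z)+\frac12c^2(\mathbf z)|<\tilde\epsilon$) such that for every three-tuple $\mathbf z$ of non-collinear points in $\Gamma(\tilde I)^3$, $$\Bigl|\frac{\mathtt S[\mathrm{Re}K_\Gamma](\mathbf z)}{c^2(\mathbf z)}-\frac32\Bigr|<\frac{\tilde\epsilon}{\kappa_0^2-\tilde\epsilon},\qquad \Bigl|\frac{\mathtt S[\mathrm{Im}K_\Gamma](\mathbf z)}{c^2(\mathbf z)}+\frac12\Bigr|<\frac{\tilde\epsilon}{\kappa_0^2-\tilde\epsilon}.$$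
   Context: $\Gamma=\{x+iA(x): x\in J\}$, $s(x)=\sqrt{1+(A'(x))^2}$. The kernel (normalizing factor $1/(2\pi)$ omitted) is $K_\Gamma(w,z)=\dfrac{A'(x)-i}{s(x)\,[\,x-y+i(A(x)-A(y))\,]}$ for $w=x+iA(x)$, $z=y+iA(y)$, $x\neq y$. For $K$ defined off the diagonal and distinct $z_1,z_2,z_3$, $\mathtt S[K](\mathbf z)=\sum_{\sigma\in S_3}K(z_{\sigma(1)},z_{\sigma(2)})\overline{K(z_{\sigma(1)},z_{\sigma(3)})}$. The Menger curvature $c(\mathbf z)$ is $0$ for collinear points and otherwise the reciprocal of the radius of the circle through the three points. *)

(* Defs.v *)
From Stdlib Require Import Reals.
From Coquelicot Require Import Coquelicot.
Open Scope R_scope.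

Definition inJ (a b : Rbar) (x : R) : Prop := Rbar_lt a x /\ Rbar_lt x b.

Definition C3_on (a b : Rbar) (A : R -> R) : Prop :=
  (forall x, inJ a b x -> forall k, (k <= 3)%nat -> ex_derive_n A k x) /\
  (forall x, inJ a b x -> continuous (Derive_n A 3) x).

Definition sfun (A : R -> R) (x : R) : R := sqrt (1 + (Derive A x) ^ 2).

Definition kappa0 (A : R -> R) (x0 : R) : R := Derive_n A 2 x0 / (sfun A x0) ^ 3.

Definition onGamma (A : R -> R) (x0 delta : R) (z : C) : Prop :=
  exists x, Rabs (x - x0) < delta /\ z = (x, A x).

Definition KGamma (A : R -> R) (w z : C) : C :=
  let x := Re w in let y := Re z in
  Cdiv (Derive A x, -1) (Cmult (RtoC (sfun A x)) (x - y, A x - A y)).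

(* S[K](z1,z2,z3) = sum_{sigma in S_3} K(z_s1, z_s2) * conj(K(z_s1, z_s3)),
   for a real-valued kernel K (so conjugation is the identity). *)
Definition Sreal (K : C -> C -> R) (z1 z2 z3 : C) : R :=
    K z1 z2 * K z1 z3 + K z1 z3 * K z1 z2
  + K z2 z1 * K z2 z3 + K z2 z3 * K z2 z1
  + K z3 z1 * K z3 z2 + K z3 z2 * K z3 z1.

Definition ReK (A : R -> R) : C -> C -> R := fun w z => Re (KGamma A w z).
Definition ImK (A : R -> R) : C -> C -> R := fun w z => Im (KGamma A w z).

Definition collinear (z1 z2 z3 : C) : Prop :=
  exists p q r : R, (p <> 0 \/ q <> 0) /\
    p * Re z1 + q * Im z1 = r /\ p * Re z2 + q * Im z2 = r /\
    p * Re z3 + q * Im z3 = r.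

Definition menger (z1 z2 z3 : C) (c : R) : Prop :=
  (collinear z1 z2 z3 /\ c = 0) \/
  (~ collinear z1 z2 z3 /\
   exists (p : C) (rad : R), 0 < rad /\
     Cmod (Cminus z1 p) = rad /\ Cmod (Cminus z2 p) = rad /\
     Cmod (Cminus z3 p) = rad /\ c = / rad).

(* Main.v *)
Require Import Defs.
From Stdlib Require Import Reals Lra Lia Psatz.
From Coquelicot Require Import Coquelicot.
Open Scope R_scope.

Definition mfun (A : R -> R) x y := (A y - A x) / (y - x).
Definition Dfun (A : R -> R) x y := (Derive A x - mfun A x y) / (x - y).

Lemma sfun_pos A x : 0 < sfun A x.
Proof. unfold sfun. apply sqrt_lt_R0. nra. Qed.
Lemma sfun_sq A x : sfun A x ^ 2 = 1 + Derive A x ^ 2.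
Proof. unfold sfun. rewrite pow2_sqrt; nra. Qed.

Lemma sum_sq_ne0 a b : a <> 0 -> a * a + b * b <> 0.
Proof. intros H. assert (0 < a * a). { apply Rsqr_pos_lt in H. exact H. } nra. Qed.

Ltac side := repeat split; try lra;
  try (apply sum_sq_ne0; try apply Rmult_integral_contrapositive_currified; lra).

Lemma ReK_eq A x y : x <> y ->
  ReK A (x, A x) (y, A y) = Dfun A x y / (sfun A x * (1 + mfun A x y ^ 2)).
Proof.
  intros Hxy. pose proof (sfun_pos A x) as Hs.
  unfold ReK, KGamma, Dfun, mfun, Cdiv, Cmult, Cinv, RtoC; simpl.
  assert (x - y <> 0) by lra. assert (y - x <> 0) by lra.
  field; side.
Qed.

Lemma ImK_eq A x y : x <> y ->
  ImK A (x, A x) (y, A y) = - (1 + Derive A x * mfun A x y) / (sfun A x * (x - y) * (1 + mfun A x y ^ 2)).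
Proof.
  intros Hxy. pose proof (sfun_pos A x) as Hs.
  unfold ImK, KGamma, Dfun, mfun, Cdiv, Cmult, Cinv, RtoC; simpl.
  assert (x - y <> 0) by lra. assert (y - x <> 0) by lra.
  field; side.
Qed.

Definition Tt A xi xj xk := Dfun A xi xj * Dfun A xi xk /
  ((1 + Derive A xi ^ 2) * (1 + mfun A xi xj ^ 2) * (1 + mfun A xi xk ^ 2)).
Definition SRe A x1 x2 x3 := 2 * (Tt A x1 x2 x3 + Tt A x2 x1 x3 + Tt A x3 x1 x2).
Definition DDfun A x1 x2 x3 := (mfun A x1 x3 - mfun A x1 x2) / (x3 - x2).
Definition C2 A x1 x2 x3 := 4 * DDfun A x1 x2 x3 ^ 2 /
  ((1 + mfun A x1 x2 ^ 2) * (1 + mfun A x1 x3 ^ 2) * (1 + mfun A x2 x3 ^ 2)).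

Lemma sq2_ne0 a b : a <> 0 -> a ^ 2 + b ^ 2 <> 0.
Proof. intros H. assert (0 < a * a). { apply Rsqr_pos_lt in H. exact H. } nra. Qed.

Lemma one_sq_ne0 m : 1 + m ^ 2 <> 0.
Proof. nra. Qed.

Lemma prodR A xi xj xk : xi <> xj -> xi <> xk ->
  ReK A (xi, A xi) (xj, A xj) * ReK A (xi, A xi) (xk, A xk) = Tt A xi xj xk.
Proof.
  intros H1 H2. rewrite !ReK_eq by auto. unfold Tt. rewrite <- sfun_sq.
  pose proof (sfun_pos A xi). pose proof (one_sq_ne0 (mfun A xi xj)).
  pose proof (one_sq_ne0 (mfun A xi xk)). field. lra.
Qed.

Definition Qt A xi xj xk := (1 + mfun A xi xj * mfun A xi xk) /
  ((xi - xj) * (xi - xk) * (1 + mfun A xi xj ^ 2) * (1 + mfun A xi xk ^ 2)).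

Lemma prodRI A xi xj xk : xi <> xj -> xi <> xk ->
  ReK A (xi, A xi) (xj, A xj) * ReK A (xi, A xi) (xk, A xk) +
  ImK A (xi, A xi) (xj, A xj) * ImK A (xi, A xi) (xk, A xk) = Qt A xi xj xk.
Proof.
  intros H1 H2. rewrite !ReK_eq, !ImK_eq by auto. unfold Qt, Dfun.
  pose proof (sfun_pos A xi). pose proof (one_sq_ne0 (mfun A xi xj)).
  pose proof (one_sq_ne0 (mfun A xi xk)).
  assert (xi - xj <> 0) by lra. assert (xi - xk <> 0) by lra.
  set (m1 := mfun A xi xj) in *. set (m2 := mfun A xi xk) in *.
  set (p := Derive A xi). set (s := sfun A xi) in *.
  assert (Hs : s ^ 2 = 1 + p ^ 2) by apply sfun_sq.
  transitivity (((p - m1) * (p - m2) + (1 + p * m1) * (1 + p * m2)) /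
     (s ^ 2 * (xi - xj) * (xi - xk) * (1 + m1 ^ 2) * (1 + m2 ^ 2))).
  - field. repeat split; lra.
  - rewrite Hs. field. repeat split; auto. nra.
Qed.

Lemma melnikov A x1 x2 x3 : x1 <> x2 -> x1 <> x3 -> x2 <> x3 ->
  2 * (Qt A x1 x2 x3 + Qt A x2 x1 x3 + Qt A x3 x1 x2) = C2 A x1 x2 x3.
Proof.
  intros. unfold Qt, C2, DDfun, mfun.
  assert (x1 - x2 <> 0) by lra. assert (x1 - x3 <> 0) by lra. assert (x2 - x3 <> 0) by lra.
  assert (x2 - x1 <> 0) by lra. assert (x3 - x1 <> 0) by lra. assert (x3 - x2 <> 0) by lra.
  set (a1 := A x1). set (a2 := A x2). set (a3 := A x3).
  field. repeat split; auto; apply sq2_ne0; auto.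
Qed.

Lemma Tt_sym A xi xj xk : Tt A xi xj xk = Tt A xi xk xj.
Proof. unfold Tt. rewrite (Rmult_comm (Dfun A xi xj)).
  rewrite (Rmult_assoc (1 + Derive A xi ^ 2)), (Rmult_comm (1 + mfun A xi xj ^ 2)), <- Rmult_assoc.
  reflexivity. Qed.

Lemma Sre_eq A x1 x2 x3 : x1 <> x2 -> x1 <> x3 -> x2 <> x3 ->
  Sreal (ReK A) (x1, A x1) (x2, A x2) (x3, A x3) = SRe A x1 x2 x3.
Proof.
  intros. unfold Sreal, SRe.
  rewrite (prodR A x1 x2 x3), (prodR A x1 x3 x2), (prodR A x2 x1 x3), (prodR A x2 x3 x1),
    (prodR A x3 x1 x2), (prodR A x3 x2 x1) by auto.
  rewrite (Tt_sym A x1 x3 x2), (Tt_sym A x2 x3 x1), (Tt_sym A x3 x2 x1). ring.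
Qed.

Lemma Sim_eq A x1 x2 x3 : x1 <> x2 -> x1 <> x3 -> x2 <> x3 ->
  Sreal (ImK A) (x1, A x1) (x2, A x2) (x3, A x3) = C2 A x1 x2 x3 - SRe A x1 x2 x3.
Proof.
  intros. rewrite <- melnikov by auto. rewrite <- Sre_eq by auto.
  rewrite <- (prodRI A x1 x2 x3), <- (prodRI A x2 x1 x3), <- (prodRI A x3 x1 x2) by auto.
  unfold Sreal. ring.
Qed.

Lemma cross_eq A x1 x2 x3 : x1 <> x2 -> x1 <> x3 -> x2 <> x3 ->
  (x2 - x1) * (A x3 - A x1) - (A x2 - A x1) * (x3 - x1) =
  (x2 - x1) * (x3 - x1) * (x3 - x2) * DDfun A x1 x2 x3.
Proof.
  intros. unfold DDfun, mfun. field. repeat split; lra.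
Qed.

Lemma menger_c2 A x1 x2 x3 c : x1 <> x2 -> x1 <> x3 -> x2 <> x3 ->
  DDfun A x1 x2 x3 <> 0 -> menger (x1, A x1) (x2, A x2) (x3, A x3) c ->
  c ^ 2 = C2 A x1 x2 x3.
Proof.
  intros H12 H13 H23 HD Hm.
  pose proof (cross_eq A x1 x2 x3 H12 H13 H23) as Hc.
  set (a1 := A x1) in *. set (a2 := A x2) in *. set (a3 := A x3) in *.
  set (cr := (x2 - x1) * (a3 - a1) - (a2 - a1) * (x3 - x1)) in *.
  assert (Hcr : cr <> 0).
  { rewrite Hc. apply Rmult_integral_contrapositive_currified; [|exact HD]. apply Rmult_integral_contrapositive_currified; [|lra]. apply Rmult_integral_contrapositive_currified; lra. }
  destruct Hm as [[Hcol _] | [_ [[p1 p2] [rad [Hr [E1 [E2 [E3 Hcc]]]]]]]].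
  - exfalso. destruct Hcol as [p [q [r [Hpq [F1 [F2 F3]]]]]]. simpl in *.
    assert (G1 : p * (x2 - x1) + q * (a2 - a1) = 0) by lra.
    assert (G2 : p * (x3 - x1) + q * (a3 - a1) = 0) by lra.
    assert (p * cr = 0).
    { unfold cr. replace (p * ((x2 - x1) * (a3 - a1) - (a2 - a1) * (x3 - x1))) with
        ((p * (x2 - x1) + q * (a2 - a1)) * (a3 - a1) - (p * (x3 - x1) + q * (a3 - a1)) * (a2 - a1)) by ring.
      rewrite G1, G2. ring. }
    assert (q * cr = 0).
    { unfold cr. replace (q * ((x2 - x1) * (a3 - a1) - (a2 - a1) * (x3 - x1))) with
        ((p * (x3 - x1) + q * (a3 - a1)) * (x2 - x1) - (p * (x2 - x1) + q * (a2 - a1)) * (x3 - x1)) by ring.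
      rewrite G1, G2. ring. }
    destruct Hpq as [Hp | Hq].
    + apply Hcr. apply (Rmult_eq_reg_l p); auto. lra.
    + apply Hcr. apply (Rmult_eq_reg_l q); auto. lra.
  - unfold Cmod, Cminus, Cplus, Copp in E1, E2, E3. simpl in E1, E2, E3.
    assert (Sq : forall u v, sqrt (u ^ 2 + v ^ 2) = rad -> u ^ 2 + v ^ 2 = rad ^ 2).
    { intros u v Huv. rewrite <- Huv. rewrite pow2_sqrt; nra. }
    apply Sq in E1. apply Sq in E2. apply Sq in E3.
    set (q1 := p1 - x1). set (q2 := p2 - a1).
    set (u1 := x2 - x1). set (u2 := a2 - a1). set (v1 := x3 - x1). set (v2 := a3 - a1).
    assert (L1 : 2 * (q1 * u1 + q2 * u2) = u1 ^ 2 + u2 ^ 2).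
    { unfold q1, q2, u1, u2. nra. }
    assert (L2 : 2 * (q1 * v1 + q2 * v2) = v1 ^ 2 + v2 ^ 2).
    { unfold q1, q2, v1, v2. nra. }
    assert (R0 : q1 ^ 2 + q2 ^ 2 = rad ^ 2).
    { unfold q1, q2. nra. }
    assert (crE : cr = u1 * v2 - u2 * v1) by (unfold cr, u1, u2, v1, v2; ring).
    assert (M1 : 2 * cr * q1 = (u1 ^ 2 + u2 ^ 2) * v2 - (v1 ^ 2 + v2 ^ 2) * u2).
    { rewrite <- L1, <- L2, crE. ring. }
    assert (M2 : 2 * cr * q2 = (v1 ^ 2 + v2 ^ 2) * u1 - (u1 ^ 2 + u2 ^ 2) * v1).
    { rewrite <- L1, <- L2, crE. ring. }
    assert (Key : 4 * cr ^ 2 * rad ^ 2 =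
       (u1 ^ 2 + u2 ^ 2) * (v1 ^ 2 + v2 ^ 2) * ((v1 - u1) ^ 2 + (v2 - u2) ^ 2)).
    { rewrite <- R0. replace (4 * cr ^ 2 * (q1 ^ 2 + q2 ^ 2)) with
        ((2 * cr * q1) ^ 2 + (2 * cr * q2) ^ 2) by ring.
      rewrite M1, M2. ring. }
    rewrite Hcc.
    assert (rad <> 0) by lra.
    assert (Hc2 : (/ rad) ^ 2 = 4 * cr ^ 2 /
       ((u1 ^ 2 + u2 ^ 2) * (v1 ^ 2 + v2 ^ 2) * ((v1 - u1) ^ 2 + (v2 - u2) ^ 2))).
    { rewrite <- Key. field. auto. }
    rewrite Hc2. unfold C2. rewrite Hc. unfold u1, u2, v1, v2, DDfun, mfun. fold a1 a2 a3.
    assert (x1 - x2 <> 0) by lra. assert (x1 - x3 <> 0) by lra. assert (x2 - x3 <> 0) by lra.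
    assert (x2 - x1 <> 0) by lra. assert (x3 - x1 <> 0) by lra. assert (x3 - x2 <> 0) by lra.
    field. repeat split; auto; try apply sq2_ne0; auto.
Qed.

Lemma ballR (a e b : R) : ball a e b <-> Rabs (b - a) < e.
Proof. split; intro H; exact H. Qed.

Definition HypJ (A : R -> R) x0 dJ :=
  forall u, Rabs (u - x0) < dJ -> forall k, (k <= 3)%nat -> ex_derive_n A k u.

Lemma between_ball x y u x0 d : Rmin x y <= u <= Rmax x y ->
  Rabs (x - x0) < d -> Rabs (y - x0) < d -> Rabs (u - x0) < d.
Proof.
  unfold Rmin, Rmax. destruct (Rle_dec x y); intros [H1 H2] Hx Hy;
  apply Rabs_def1; apply Rabs_def2 in Hx; apply Rabs_def2 in Hy; lra.
Qed.

Lemma ex_derive_cpt (f : R -> R) u : ex_derive f u -> continuity_pt f u.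
Proof. intro H. apply continuity_pt_filterlim. apply (ex_derive_continuous (K:=R_AbsRing) (V:=R_NormedModule) f u H). Qed.

Lemma mfun_sym A x y : x <> y -> mfun A x y = mfun A y x.
Proof. intros. unfold mfun. field. split; lra. Qed.

Lemma mvt_m A x0 dJ d x y : HypJ A x0 dJ -> d <= dJ -> x <> y ->
  Rabs (x - x0) < d -> Rabs (y - x0) < d ->
  exists eta, Rabs (eta - x0) < d /\ mfun A x y = Derive A eta.
Proof.
  intros HJ Hd Hxy Hx Hy.
  destruct (MVT_gen A x y (Derive A)) as [c [Hc E]].
  - intros u Hu. apply Derive_correct.
    apply (HJ u) with (k := 1%nat); [|lia].
    assert (Rabs (u - x0) < d) by (apply (between_ball x y); [lra|auto|auto]). lra.
  - intros u Hu. apply ex_derive_cpt.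
    apply (HJ u) with (k := 1%nat); [|lia].
    assert (Rabs (u - x0) < d) by (apply (between_ball x y); auto). lra.
  - exists c. split. apply (between_ball x y); auto.
    unfold mfun. rewrite E. field. lra.
Qed.

Lemma taylor_D A x0 dJ d x y : HypJ A x0 dJ -> d <= dJ -> x < y ->
  Rabs (x - x0) < d -> Rabs (y - x0) < d ->
  exists z, Rabs (z - x0) < d /\ Dfun A x y = Derive_n A 2 z / 2.
Proof.
  intros HJ Hd Hxy Hx Hy.
  destruct (Taylor_Lagrange A 1 x y Hxy) as [z [Hz E]].
  - intros t Ht k Hk. apply HJ; [|lia].
    assert (Rabs (t - x0) < d); [|lra].
    apply (between_ball x y); auto. unfold Rmin, Rmax.
    destruct (Rle_dec x y); lra.
  - simpl in E. exists z. split.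
    + apply (between_ball x y); auto. unfold Rmin, Rmax.
      destruct (Rle_dec x y); lra.
    + unfold Dfun, mfun. change (Derive (fun x : R => A x)) with (Derive A) in E.
      change (Derive (fun x : R => Derive A x) z) with (Derive_n A 2 z) in E.
      rewrite E. field. lra.
Qed.

Lemma D_form A x0 dJ d x y : HypJ A x0 dJ -> d <= dJ -> x <> y ->
  Rabs (x - x0) < d -> Rabs (y - x0) < d ->
  exists eta zeta, Rabs (eta - x0) < d /\ Rabs (zeta - x0) < d /\
    Dfun A x y = Derive_n A 2 eta - Derive_n A 2 zeta / 2.
Proof.
  intros HJ Hd Hxy Hx Hy.
  destruct (Rlt_or_le x y) as [Hlt | Hle].
  - destruct (taylor_D A x0 dJ d x y) as [z [Hz E]]; auto.
    exists z, z. repeat split; auto. rewrite E. field.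
  - assert (Hlt : y < x) by lra.
    destruct (taylor_D A x0 dJ d y x) as [z [Hz E]]; auto.
    destruct (MVT_gen (Derive A) y x (Derive_n A 2)) as [c [Hc E2]].
    + intros u Hu. apply (Derive_correct (Derive A) u).
      apply (HJ u) with (k := 2%nat); [|lia].
      assert (Rabs (u - x0) < d) by (apply (between_ball y x); [lra|auto|auto]). lra.
    + intros u Hu. apply ex_derive_cpt.
      apply (HJ u) with (k := 2%nat); [|lia].
      assert (Rabs (u - x0) < d) by (apply (between_ball y x); auto). lra.
    + exists c, z. repeat split; auto. apply (between_ball y x); auto.
      assert (Dfun A x y + Dfun A y x = Derive_n A 2 c).
      { unfold Dfun. rewrite (mfun_sym A y x) by lra.
        apply (Rmult_eq_reg_r (x - y)); [|lra].
        replace (Derive_n A 2 c * (x - y)) with (Derive A x - Derive A y) by lra.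
        field. lra. }
      lra.
Qed.

Lemma DD_core A x0 dJ d x1 x2 x3 : HypJ A x0 dJ -> d <= dJ ->
  x1 <> x2 -> x1 <> x3 -> x2 <> x3 ->
  Rabs (x1 - x0) < d -> Rabs (x2 - x0) < d -> Rabs (x3 - x0) < d ->
  (x1 < x2 /\ x1 < x3) \/ (x2 < x1 /\ x3 < x1) ->
  exists eta zeta, Rabs (eta - x0) < d /\ Rabs (zeta - x0) < d /\
    DDfun A x1 x2 x3 = Derive_n A 2 eta - Derive_n A 2 zeta / 2.
Proof.
  intros HJ Hd H12 H13 H23 B1 B2 B3 Hext.
  assert (Hout : forall u, Rmin x2 x3 <= u <= Rmax x2 x3 -> u <> x1).
  { intros u Hu. unfold Rmin, Rmax in Hu. destruct (Rle_dec x2 x3); lra. }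
  destruct (MVT_gen (fun t => mfun A x1 t) x2 x3 (fun t => Dfun A t x1)) as [c [Hc E]].
  - intros u Hu. assert (u <> x1) by (apply Hout; lra).
    assert (Rabs (u - x0) < d) by (apply (between_ball x2 x3); [lra|auto|auto]).
    unfold mfun. auto_derive.
    + split; [|split; auto; lra]. apply (HJ u) with (k := 1%nat); [lra|lia].
    + change (Derive (fun x : R => A x)) with (Derive A).
      unfold Dfun, mfun. field. split; lra.
  - intros u Hu. assert (u <> x1) by (apply Hout; lra).
    assert (Rabs (u - x0) < d) by (apply (between_ball x2 x3); [lra|auto|auto]).
    apply ex_derive_cpt.
    unfold mfun. auto_derive. split; [|split; auto; lra].
    apply (HJ u) with (k := 1%nat); [lra|lia].
  - assert (c <> x1) by (apply Hout; lra).
    assert (Rabs (c - x0) < d) by (apply (between_ball x2 x3); [lra|auto|auto]).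
    destruct (D_form A x0 dJ d c x1) as [eta [zeta [He [Hz E2]]]]; auto.
    exists eta, zeta. repeat split; auto. rewrite <- E2.
    unfold DDfun. simpl in E. rewrite E. field. lra.
Qed.

Lemma DD_form A x0 dJ d x1 x2 x3 : HypJ A x0 dJ -> d <= dJ ->
  x1 <> x2 -> x1 <> x3 -> x2 <> x3 ->
  Rabs (x1 - x0) < d -> Rabs (x2 - x0) < d -> Rabs (x3 - x0) < d ->
  exists eta zeta, Rabs (eta - x0) < d /\ Rabs (zeta - x0) < d /\
    DDfun A x1 x2 x3 = Derive_n A 2 eta - Derive_n A 2 zeta / 2.
Proof.
  intros HJ Hd H12 H13 H23 B1 B2 B3.
  destruct (Rlt_or_le x1 x2); destruct (Rlt_or_le x1 x3); destruct (Rlt_or_le x2 x3).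
  all: first
    [ apply (DD_core A x0 dJ d x1 x2 x3); auto; lra
    | assert (E : DDfun A x1 x2 x3 = DDfun A x2 x1 x3)
        by (unfold DDfun, mfun; field; repeat split; lra);
      rewrite E; apply (DD_core A x0 dJ d x2 x1 x3); auto; lra
    | assert (E : DDfun A x1 x2 x3 = DDfun A x3 x1 x2)
        by (unfold DDfun, mfun; field; repeat split; lra);
      rewrite E; apply (DD_core A x0 dJ d x3 x1 x2); auto; lra ].
Qed.

Definition Fx (x0 dJ : R) (Q : R * R * R -> Prop) : Prop :=
  exists d, 0 < d /\ d <= dJ /\ forall x1 x2 x3,
    Rabs (x1 - x0) < d -> Rabs (x2 - x0) < d -> Rabs (x3 - x0) < d ->
    x1 <> x2 -> x1 <> x3 -> x2 <> x3 -> Q (x1, x2, x3).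

Lemma Fx_filter x0 dJ : 0 < dJ -> Filter (Fx x0 dJ).
Proof.
  intros HdJ. constructor.
  - exists dJ. repeat split; auto; lra.
  - intros P Q [d1 [H1 [H1' HP]]] [d2 [H2 [H2' HQ]]].
    exists (Rmin d1 d2). split; [apply Rmin_glb_lt; auto|]. split.
    + apply Rle_trans with d1; auto. apply Rmin_l.
    + intros. pose proof (Rmin_l d1 d2). pose proof (Rmin_r d1 d2).
      split; [apply HP|apply HQ]; auto; lra.
  - intros P Q HPQ [d [H1 [H2 HP]]]. exists d. repeat split; auto.
Qed.

Definition sel (i : nat) (t : R * R * R) : R :=
  match i with O => fst (fst t) | 1%nat => snd (fst t) | _ => snd t end.

Lemma lim1 x0 dJ (f : R * R * R -> R) (g : R -> R) : 0 < dJ ->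
  (forall d x1 x2 x3, 0 < d -> d <= dJ ->
    Rabs (x1 - x0) < d -> Rabs (x2 - x0) < d -> Rabs (x3 - x0) < d ->
    x1 <> x2 -> x1 <> x3 -> x2 <> x3 ->
    exists eta, Rabs (eta - x0) < d /\ f (x1, x2, x3) = g eta) ->
  continuous g x0 -> filterlim f (Fx x0 dJ) (locally (g x0)).
Proof.
  intros HdJ Hf Hg. pose proof (Fx_filter x0 dJ HdJ).
  apply filterlim_locally. intros eps.
  destruct (proj1 (filterlim_locally g (g x0)) Hg eps) as [del Hdel].
  exists (Rmin del dJ). split; [apply Rmin_glb_lt; auto; apply cond_pos|].
  split; [apply Rmin_r|]. intros.
  destruct (Hf (Rmin del dJ) x1 x2 x3) as [eta [He E]]; auto.
  apply Rmin_glb_lt; auto; apply cond_pos. apply Rmin_r.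
  rewrite E. apply Hdel. apply ballR. pose proof (Rmin_l del dJ). lra.
Qed.

Lemma lim2 x0 dJ (f : R * R * R -> R) (g : R -> R) : 0 < dJ ->
  (forall d x1 x2 x3, 0 < d -> d <= dJ ->
    Rabs (x1 - x0) < d -> Rabs (x2 - x0) < d -> Rabs (x3 - x0) < d ->
    x1 <> x2 -> x1 <> x3 -> x2 <> x3 ->
    exists eta zeta, Rabs (eta - x0) < d /\ Rabs (zeta - x0) < d /\
      f (x1, x2, x3) = g eta - g zeta / 2) ->
  continuous g x0 -> filterlim f (Fx x0 dJ) (locally (g x0 / 2)).
Proof.
  intros HdJ Hf Hg. pose proof (Fx_filter x0 dJ HdJ).
  apply filterlim_locally. intros eps.
  assert (He2 : 0 < eps / 2) by (pose proof (cond_pos eps); lra).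
  destruct (proj1 (filterlim_locally g (g x0)) Hg (mkposreal _ He2)) as [del Hdel].
  exists (Rmin del dJ). split; [apply Rmin_glb_lt; auto; apply cond_pos|].
  split; [apply Rmin_r|]. intros.
  destruct (Hf (Rmin del dJ) x1 x2 x3) as [eta [zeta [He [Hz E]]]]; auto.
  apply Rmin_glb_lt; auto; apply cond_pos. apply Rmin_r.
  rewrite E. apply ballR. pose proof (Rmin_l del dJ).
  assert (A1 : Rabs (g eta - g x0) < eps / 2).
  { apply ballR. apply Hdel. apply ballR. lra. }
  assert (A2 : Rabs (g zeta - g x0) < eps / 2).
  { apply ballR. apply Hdel. apply ballR. lra. }
  simpl in A1, A2.
  apply Rabs_def2 in A1. apply Rabs_def2 in A2. apply Rabs_def1; lra.
Qed.

Section Comb.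
Context {T : Type} (F : (T -> Prop) -> Prop) {FF : Filter F}.

Lemma lim_plus (f g : T -> R) a b : filterlim f F (locally a) -> filterlim g F (locally b) ->
  filterlim (fun t => f t + g t) F (locally (a + b)).
Proof. intros Hf Hg. eapply filterlim_comp_2; [exact Hf|exact Hg|]. exact (filterlim_plus (V:=R_NormedModule) a b). Qed.

Lemma lim_mult (f g : T -> R) a b : filterlim f F (locally a) -> filterlim g F (locally b) ->
  filterlim (fun t => f t * g t) F (locally (a * b)).
Proof. intros Hf Hg. eapply filterlim_comp_2; [exact Hf|exact Hg|]. exact (filterlim_mult (K:=R_AbsRing) a b). Qed.

Lemma lim_inv (f : T -> R) a : filterlim f F (locally a) -> a <> 0 ->
  filterlim (fun t => / f t) F (locally (/ a)).
Proof. intros Hf Ha. eapply filterlim_comp; [exact Hf|]. exact (continuous_Rinv a Ha). Qed.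

Lemma lim_div (f g : T -> R) a b : filterlim f F (locally a) -> filterlim g F (locally b) -> b <> 0 ->
  filterlim (fun t => f t / g t) F (locally (a / b)).
Proof. intros Hf Hg Hb. apply lim_mult; auto. apply lim_inv; auto. Qed.

Lemma lim_sq (f : T -> R) a : filterlim f F (locally a) ->
  filterlim (fun t => f t ^ 2) F (locally (a ^ 2)).
Proof.
  intros Hf. replace (a ^ 2) with (a * a) by ring.
  eapply filterlim_ext; [|apply (lim_mult f f); eauto]. intros; simpl; ring.
Qed.

Lemma lim_const (c : R) : filterlim (fun _ : T => c) F (locally c).
Proof. apply filterlim_const. Qed.

Lemma lim_eq (f : T -> R) a b : filterlim f F (locally a) -> a = b -> filterlim f F (locally b).
Proof. intros H ->. exact H. Qed.

Lemma lim_event (f : T -> R) a eps : filterlim f F (locally a) -> 0 < eps ->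
  F (fun t => Rabs (f t - a) < eps).
Proof.
  intros Hf He. exact (proj1 (filterlim_locally f a) Hf (mkposreal eps He)).
Qed.
End Comb.

Ltac lim_tac :=
  cbv beta; lazymatch goal with
  | |- filterlim (fun t => @?f t + @?g t) _ _ => eapply (lim_plus _ f g); [lim_tac|lim_tac]
  | |- filterlim (fun t => @?f t * @?g t) _ _ => eapply (lim_mult _ f g); [lim_tac|lim_tac]
  | |- filterlim (fun t => @?f t / @?g t) _ _ => eapply (lim_div _ f g); [lim_tac|lim_tac|idtac]
  | |- filterlim (fun t => @?f t ^ 2) _ _ => eapply (lim_sq _ f); lim_tac
  | _ => first [eassumption | apply lim_const]
  end.

Lemma sel_ball i x1 x2 x3 x0 d : (i <= 2)%nat ->
  Rabs (x1 - x0) < d -> Rabs (x2 - x0) < d -> Rabs (x3 - x0) < d ->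
  Rabs (sel i (x1, x2, x3) - x0) < d.
Proof. intros Hi. destruct i as [|[|[|i]]]; simpl; auto; lia. Qed.

Lemma sel_neq i j x1 x2 x3 : (i <= 2)%nat -> (j <= 2)%nat -> i <> j ->
  x1 <> x2 -> x1 <> x3 -> x2 <> x3 -> sel i (x1, x2, x3) <> sel j (x1, x2, x3).
Proof. intros Hi Hj Hij. destruct i as [|[|[|i]]]; destruct j as [|[|[|j]]]; simpl; auto; try lia. Qed.

Section Lims.
Variables (A : R -> R) (x0 dJ : R) (HJ : HypJ A x0 dJ) (HdJ : 0 < dJ).

Lemma contA1 : continuous (Derive A) x0.
Proof.
  apply (ex_derive_continuous (K:=R_AbsRing) (V:=R_NormedModule)).
  apply (HJ x0) with (k := 2%nat); [|lia]. rewrite Rminus_diag, Rabs_R0. auto.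
Qed.

Lemma contA2 : continuous (Derive_n A 2) x0.
Proof.
  apply (ex_derive_continuous (K:=R_AbsRing) (V:=R_NormedModule)).
  apply (HJ x0) with (k := 3%nat); [|lia]. rewrite Rminus_diag, Rabs_R0. auto.
Qed.

Lemma lim_p i : (i <= 2)%nat ->
  filterlim (fun t => Derive A (sel i t)) (Fx x0 dJ) (locally (Derive A x0)).
Proof.
  intros Hi. apply lim1; auto; [|apply contA1].
  intros. exists (sel i (x1, x2, x3)). split; auto. apply sel_ball; auto.
Qed.

Lemma lim_m i j : (i <= 2)%nat -> (j <= 2)%nat -> i <> j ->
  filterlim (fun t => mfun A (sel i t) (sel j t)) (Fx x0 dJ) (locally (Derive A x0)).
Proof.
  intros Hi Hj Hij. apply lim1; auto; [|apply contA1].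
  intros. apply (mvt_m A x0 dJ d); auto. apply sel_neq; auto.
  all: apply sel_ball; auto.
Qed.

Lemma lim_D i j : (i <= 2)%nat -> (j <= 2)%nat -> i <> j ->
  filterlim (fun t => Dfun A (sel i t) (sel j t)) (Fx x0 dJ) (locally (Derive_n A 2 x0 / 2)).
Proof.
  intros Hi Hj Hij. apply lim2; auto; [|apply contA2].
  intros. apply (D_form A x0 dJ d); auto. apply sel_neq; auto.
  all: apply sel_ball; auto.
Qed.

Lemma lim_DD :
  filterlim (fun t => DDfun A (sel 0 t) (sel 1 t) (sel 2 t)) (Fx x0 dJ) (locally (Derive_n A 2 x0 / 2)).
Proof.
  apply lim2; auto; [|apply contA2].
  intros. apply (DD_form A x0 dJ d); auto.
Qed.
End Lims.

Lemma J_ball a b x0 : inJ a b x0 ->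
  exists dJ, 0 < dJ /\ forall x, Rabs (x - x0) < dJ -> inJ a b x.
Proof.
  intros [Ha Hb].
  destruct (open_Rbar_gt' (Finite x0) a Ha) as [e1 H1].
  destruct (open_Rbar_lt' (Finite x0) b Hb) as [e2 H2].
  exists (Rmin e1 e2). split. apply Rmin_glb_lt; apply cond_pos.
  intros x Hx. pose proof (Rmin_l e1 e2). pose proof (Rmin_r e1 e2).
  split; [apply H1|apply H2]; apply ballR; lra.
Qed.

Lemma coll_two (z w : C) : exists p q r : R, (p <> 0 \/ q <> 0) /\
  p * Re z + q * Im z = r /\ p * Re w + q * Im w = r.
Proof.
  destruct (Req_dec (Im z - Im w) 0) as [E1|E1].
  - destruct (Req_dec (Re w - Re z) 0) as [E2|E2].
    + exists 1, 0, (Re z). split; [left; lra|]. split; lra.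
    + exists (Im z - Im w), (Re w - Re z), ((Im z - Im w) * Re z + (Re w - Re z) * Im z).
      split; [right; auto|]. split; [ring|]. rewrite E1. nra.
  - exists (Im z - Im w), (Re w - Re z), ((Im z - Im w) * Re z + (Re w - Re z) * Im z).
    split; [left; auto|]. split; ring.
Qed.

Lemma noncoll_distinct z1 z2 z3 : ~ collinear z1 z2 z3 -> z1 <> z2 /\ z1 <> z3 /\ z2 <> z3.
Proof.
  intros Hn. repeat split; intro E; apply Hn; subst.
  - destruct (coll_two z2 z3) as [p [q [r [H1 [H2 H3]]]]]. exists p, q, r. tauto.
  - destruct (coll_two z3 z2) as [p [q [r [H1 [H2 H3]]]]]. exists p, q, r. tauto.
  - destruct (coll_two z1 z3) as [p [q [r [H1 [H2 H3]]]]]. exists p, q, r. tauto.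
Qed.

Lemma ratio_bound X Cc e k : Rabs X < e -> 0 < k - e -> k - e < Cc -> Rabs (X / Cc) < e / (k - e).
Proof.
  intros HX Hk HC. rewrite Rabs_div by lra. rewrite (Rabs_pos_eq Cc) by lra.
  apply Rlt_trans with (e / Cc).
  - unfold Rdiv. apply Rmult_lt_compat_r; [apply Rinv_0_lt_compat; lra|exact HX].
  - unfold Rdiv. apply Rmult_lt_compat_l; [pose proof (Rabs_pos X); lra|].
    apply Rinv_lt_contravar; nra.
Qed.

Theorem corollary1p2 (a b : Rbar) (A : R -> R) (x0 : R) :
  C3_on a b A -> inJ a b x0 -> Derive_n A 2 x0 <> 0 ->
  exists eps0 : R, 0 < eps0 /\
  forall eps : R, 0 < eps < eps0 ->
  exists delta : R, 0 < delta /\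
    (forall x, Rabs (x - x0) < delta -> inJ a b x) /\
    (forall z1 z2 z3 : C,
       onGamma A x0 delta z1 -> onGamma A x0 delta z2 -> onGamma A x0 delta z3 ->
       z1 <> z2 -> z1 <> z3 -> z2 <> z3 ->
       forall c : R, menger z1 z2 z3 c ->
         Rabs (c ^ 2 - (kappa0 A x0) ^ 2) < eps /\
         Rabs (Sreal (ReK A) z1 z2 z3 - 3 / 2 * c ^ 2) < eps /\
         Rabs (Sreal (ImK A) z1 z2 z3 + 1 / 2 * c ^ 2) < eps) /\
    (forall z1 z2 z3 : C,
       onGamma A x0 delta z1 -> onGamma A x0 delta z2 -> onGamma A x0 delta z3 ->
       ~ collinear z1 z2 z3 ->
       forall c : R, menger z1 z2 z3 c ->
         Rabs (Sreal (ReK A) z1 z2 z3 / c ^ 2 - 3 / 2)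
           < eps / ((kappa0 A x0) ^ 2 - eps) /\
         Rabs (Sreal (ImK A) z1 z2 z3 / c ^ 2 + 1 / 2)
           < eps / ((kappa0 A x0) ^ 2 - eps)).
Proof.
  intros HC3 Hx0 HA2.
  pose proof (sfun_pos A x0) as Hs0.
  set (L := Derive_n A 2 x0) in *.
  set (k2 := kappa0 A x0 ^ 2).
  assert (Hk : 0 < k2).
  { unfold k2, kappa0. fold L. apply pow2_gt_0.
    unfold Rdiv. apply Rmult_integral_contrapositive_currified; auto.
    apply Rinv_neq_0_compat. apply pow_nonzero. lra. }
  exists k2. split; auto. intros eps [He1 He2].
  destruct (J_ball a b x0 Hx0) as [dJ [HdJ HdJin]].
  assert (HJ : HypJ A x0 dJ).
  { intros u Hu k Hk'. apply (proj1 HC3); auto. }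
  pose proof (Fx_filter x0 dJ HdJ) as FF.
  pose proof (lim_p A x0 dJ HJ HdJ 0 ltac:(lia)) as P0.
  pose proof (lim_p A x0 dJ HJ HdJ 1 ltac:(lia)) as P1.
  pose proof (lim_p A x0 dJ HJ HdJ 2 ltac:(lia)) as P2.
  pose proof (lim_m A x0 dJ HJ HdJ 0 1 ltac:(lia) ltac:(lia) ltac:(lia)) as M01.
  pose proof (lim_m A x0 dJ HJ HdJ 0 2 ltac:(lia) ltac:(lia) ltac:(lia)) as M02.
  pose proof (lim_m A x0 dJ HJ HdJ 1 0 ltac:(lia) ltac:(lia) ltac:(lia)) as M10.
  pose proof (lim_m A x0 dJ HJ HdJ 1 2 ltac:(lia) ltac:(lia) ltac:(lia)) as M12.
  pose proof (lim_m A x0 dJ HJ HdJ 2 0 ltac:(lia) ltac:(lia) ltac:(lia)) as M20.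
  pose proof (lim_m A x0 dJ HJ HdJ 2 1 ltac:(lia) ltac:(lia) ltac:(lia)) as M21.
  pose proof (lim_D A x0 dJ HJ HdJ 0 1 ltac:(lia) ltac:(lia) ltac:(lia)) as D01.
  pose proof (lim_D A x0 dJ HJ HdJ 0 2 ltac:(lia) ltac:(lia) ltac:(lia)) as D02.
  pose proof (lim_D A x0 dJ HJ HdJ 1 0 ltac:(lia) ltac:(lia) ltac:(lia)) as D10.
  pose proof (lim_D A x0 dJ HJ HdJ 1 2 ltac:(lia) ltac:(lia) ltac:(lia)) as D12.
  pose proof (lim_D A x0 dJ HJ HdJ 2 0 ltac:(lia) ltac:(lia) ltac:(lia)) as D20.
  pose proof (lim_D A x0 dJ HJ HdJ 2 1 ltac:(lia) ltac:(lia) ltac:(lia)) as D21.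
  pose proof (lim_DD A x0 dJ HJ HdJ) as DDl.
  fold L in D01, D02, D10, D12, D20, D21, DDl.
  pose proof (sfun_sq A x0) as Hsq.
  assert (LS : filterlim (fun t => SRe A (sel 0 t) (sel 1 t) (sel 2 t)) (Fx x0 dJ)
                 (locally (3 / 2 * k2))).
  { eapply lim_eq.
    { unfold SRe, Tt. lim_tac.
      all: first [exact FF | repeat apply Rmult_integral_contrapositive_currified; apply one_sq_ne0]. }
    unfold k2, kappa0. fold L. rewrite <- Hsq. match goal with |- ?x = ?y => change (@eq R x y) end. field. lra. }
  assert (LC : filterlim (fun t => C2 A (sel 0 t) (sel 1 t) (sel 2 t)) (Fx x0 dJ)
                 (locally k2)).
  { eapply lim_eq.
    { unfold C2. lim_tac.
      all: first [exact FF | repeat apply Rmult_integral_contrapositive_currified; apply one_sq_ne0]. }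
    unfold k2, kappa0. fold L. rewrite <- Hsq. match goal with |- ?x = ?y => change (@eq R x y) end. field. lra. }
  assert (HL : 0 < Rabs (L / 2)).
  { apply Rabs_pos_lt. unfold Rdiv. apply Rmult_integral_contrapositive_currified; auto. lra. }
  assert (He4 : 0 < eps / 4) by lra.
  pose proof (lim_event _ _ _ _ LC He4) as E1.
  pose proof (lim_event _ _ _ _ LS He4) as E2.
  pose proof (lim_event _ _ _ _ DDl HL) as E3.
  destruct (filter_and _ _ E1 (filter_and _ _ E2 E3)) as [d [Hd [HddJ Hall]]].
  assert (Loc : forall z1 z2 z3 : C,
       onGamma A x0 d z1 -> onGamma A x0 d z2 -> onGamma A x0 d z3 ->
       z1 <> z2 -> z1 <> z3 -> z2 <> z3 ->
       forall c : R, menger z1 z2 z3 c ->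
         Rabs (c ^ 2 - (kappa0 A x0) ^ 2) < eps /\
         Rabs (Sreal (ReK A) z1 z2 z3 - 3 / 2 * c ^ 2) < eps /\
         Rabs (Sreal (ImK A) z1 z2 z3 + 1 / 2 * c ^ 2) < eps).
  { intros z1 z2 z3 [y1 [B1 ->]] [y2 [B2 ->]] [y3 [B3 ->]] N12 N13 N23 c Hm.
    assert (y1 <> y2) by (intro; subst; apply N12; reflexivity).
    assert (y1 <> y3) by (intro; subst; apply N13; reflexivity).
    assert (y2 <> y3) by (intro; subst; apply N23; reflexivity).
    destruct (Hall y1 y2 y3) as [F1 [F2 F3]]; auto. simpl in F1, F2, F3.
    assert (HDD : DDfun A y1 y2 y3 <> 0).
    { intro E. rewrite E in F3. rewrite Rminus_0_l, Rabs_Ropp in F3. lra. }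
    rewrite (menger_c2 A y1 y2 y3 c) by auto.
    rewrite Sre_eq, Sim_eq by auto. fold k2.
    apply Rabs_def2 in F1. apply Rabs_def2 in F2.
    repeat split; apply Rabs_def1; lra. }
  exists d. split; auto. split.
  { intros x Hx. apply HdJin. lra. }
  split; [exact Loc|].
  intros z1 z2 z3 G1 G2 G3 Hnc c Hm.
  destruct (noncoll_distinct z1 z2 z3 Hnc) as [N12 [N13 N23]].
  destruct (Loc z1 z2 z3 G1 G2 G3 N12 N13 N23 c Hm) as [F1 [F2 F3]].
  fold k2 in F1 |- *.
  assert (Hc : k2 - eps < c ^ 2) by (apply Rabs_def2 in F1; lra).
  split.
  - replace (Sreal (ReK A) z1 z2 z3 / c ^ 2 - 3 / 2) with
      ((Sreal (ReK A) z1 z2 z3 - 3 / 2 * c ^ 2) / c ^ 2) by (field; intro; nra).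
    apply ratio_bound; auto; lra.
  - replace (Sreal (ImK A) z1 z2 z3 / c ^ 2 + 1 / 2) with
      ((Sreal (ImK A) z1 z2 z3 + 1 / 2 * c ^ 2) / c ^ 2) by (field; intro; nra).
    apply ratio_bound; auto; lra.
Qed.
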